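(* Let $\mathcal{A}$ be a $\tau^*_{\mathrm{tup}}$-structure which is a model of $T_{\mathrm{tup}}$ and whose $M$-sort (as a $\tau$-structure) is $\mathcal{M}$. Then there is a unique embedding $e$ of the $\tau_{\mathrm{tup}}$-structure $\mathcal{M}^{<\mathbb{N}}$ into (the $\tau_{\mathrm{tup}}$-reduct of) $\mathcal{A}$ which is the identity on the sort $M$; moreover $e$ is an embedding of $(\mathcal{M}^{<\mathbb{N}},R',g')$ into $\mathcal{A}$, where $R'=\{n\in\mathbb{N}: e(n)\in R^{\mathcal{A}}\}$ and $g'(n,\pi)=g^{\mathcal{A}}(e(n),e(\pi))$. Furthermore, identifying $\mathcal{M}^{<\mathbb{N}}$ with its image under $e$: the $N$-sort of $\mathcal{A}$ is an end extension of $\mathbb{N}$, and every element $\pi$ of the $M_{\mathrm{tup}}$-sort of $\mathcal{A}$ with $|\pi|\in\mathbb{N}$ belongs to $M^{<\mathbb{N}}$.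
   Context: Fix a countable language $\tau$. $\tau_{\mathrm{tup}}$ is the three-sorted language with sorts $M$ (carrying the symbols of $\tau$), $N$ (carrying the language of arithmetic $0,1,+,\cdot,<$), and $M_{\mathrm{tup}}$, together with a function $|\cdot|:M_{\mathrm{tup}}\to N$ and a relation $\mathrm{ind}\subseteq M_{\mathrm{tup}}\times N\times M$ (''the $i$-th entry of $\pi$ is $m$''). $\tau^*_{\mathrm{tup}}=\tau_{\mathrm{tup}}\cup\{R,g\}$ with $R$ a unary relation on $N$ and $g:N\times M_{\mathrm{tup}}\to M$ a binary function. $T_{\mathrm{tup}}$ is the theory stating: the $N$-sort satisfies $PA^-$ (Peano arithmetic without induction, i.e. the finitely axiomatized theory of non-negative parts of discretely ordered rings); (a) $\mathrm{ind}(\pi,i,m)\to i<|\pi|$; (b) $\mathrm{ind}(\pi,i,m)\wedge\mathrm{ind}(\pi,i,m')\to m=m'$; (c) $i<|\pi|\to\exists m\,\mathrm{ind}(\pi,i,m)$; (d) if $|\pi|=|\rho|$ and for all $i<|\pi|$ there is $m$ with $\mathrm{ind}(\pi,i,m)\wedge\mathrm{ind}(\rho,i,m)$, then $\pi=\rho$; (e) some $\pi$ has $|\pi|=0$; (f) for all $\pi,m$ there is $\rho$ with $|\rho|=|\pi|+1$, $\mathrm{ind}(\rho,|\pi|,m)$ and $\mathrm{ind}(\pi,i,m')\leftrightarrow\mathrm{ind}(\rho,i,m')$ for all $i<|\pi|$, $m'$; (g) for all $\pi$ with $|\pi|\ge1$ there is $\rho$ with $|\rho|=|\pi|-1$ and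 $\mathrm{ind}(\pi,i,m)\leftrightarrow\mathrm{ind}(\rho,i,m)$ for all $i<|\rho|$, $m$. For a $\tau$-structure $\mathcal{M}$ with domain $M$, $\mathcal{M}^{<\mathbb{N}}=(\mathcal{M},\mathbb{N},M^{<\mathbb{N}})$ is the $\tau_{\mathrm{tup}}$-structure with the standard natural numbers and all finite tuples from $M$, with the natural length and indexing. *)

(* Defs.v *)
From Stdlib Require Import List Arith Fin.
Import ListNotations.
Set Implicit Arguments.

Record language := {
  funsym : Type;
  fun_ar : funsym -> nat;
  relsym : Type;
  rel_ar : relsym -> nat;
}.

Definition countable_language (L : language) : Prop :=
  (exists c : funsym L -> nat, forall f g, c f = c g -> f = g) /\
  (exists c : relsym L -> nat, forall r s, c r = c s -> r = s).

Record Lstruct (L : language) := {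
  carrier :> Type;
  fun_int : forall f : funsym L, (Fin.t (@fun_ar L f) -> carrier) -> carrier;
  rel_int : forall r : relsym L, (Fin.t (@rel_ar L r) -> carrier) -> Prop;
}.

Record tupStruct (L : language) (Mst : Lstruct L) := {
  Nsort : Type;
  zeroN : Nsort; oneN : Nsort;
  addN : Nsort -> Nsort -> Nsort;
  mulN : Nsort -> Nsort -> Nsort;
  ltN : Nsort -> Nsort -> Prop;
  Tsort : Type;
  len : Tsort -> Nsort;
  ind : Tsort -> Nsort -> carrier Mst -> Prop;
}.

Record tupStarStruct (L : language) (Mst : Lstruct L) := {
  base :> tupStruct Mst;
  Rrel : Nsort base -> Prop;
  gfun : Nsort base -> Tsort base -> carrier Mst;
}.

Section Theory.
Variables (L : language) (Mst : Lstruct L) (A : tupStruct Mst).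
Local Notation N := (Nsort A).
Local Notation "x + y" := (addN A x y).
Local Notation "x * y" := (mulN A x y).
Local Notation "x < y" := (ltN A x y).
Local Notation "0" := (zeroN A).
Local Notation "1" := (oneN A).

(** PA^- (Kaye, Models of Peano Arithmetic, ch. 2). *)
Definition PAminus : Prop :=
  (forall x y z : N, (x + y) + z = x + (y + z)) /\
  (forall x y : N, x + y = y + x) /\
  (forall x y z : N, (x * y) * z = x * (y * z)) /\
  (forall x y : N, x * y = y * x) /\
  (forall x y z : N, x * (y + z) = x * y + x * z) /\
  (forall x : N, x + 0 = x /\ x * 0 = 0) /\
  (forall x : N, x * 1 = x) /\
  (forall x y z : N, x < y -> y < z -> x < z) /\
  (forall x : N, ~ x < x) /\
  (forall x y : N, x < y \/ x = y \/ y < x) /\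
  (forall x y z : N, x < y -> x + z < y + z) /\
  (forall x y z : N, 0 < z -> x < y -> x * z < y * z) /\
  (forall x y : N, x < y -> exists z, x + z = y) /\
  (0 < 1 /\ forall x : N, 0 < x -> (1 < x \/ 1 = x)) /\
  (forall x : N, 0 < x \/ 0 = x).

Definition T_tup : Prop :=
  PAminus /\
  (forall p i m, ind A p i m -> i < len A p) /\
  (forall p i m m', ind A p i m -> ind A p i m' -> m = m') /\
  (forall p i, i < len A p -> exists m, ind A p i m) /\
  (forall p r, len A p = len A r ->
               (forall i, i < len A p -> exists m, ind A p i m /\ ind A r i m) ->
               p = r) /\
  (exists p, len A p = 0) /\
  (forall p m, exists r, len A r = len A p + 1 /\ ind A r (len A p) m /\
               forall i m', i < len A p -> (ind A p i m' <-> ind A r i m')) /\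
  (forall p, (1 < len A p \/ 1 = len A p) ->
               exists r, len A r + 1 = len A p /\
               forall i m, i < len A r -> (ind A p i m <-> ind A r i m)).
End Theory.

Definition stdTup (L : language) (Mst : Lstruct L) : tupStruct Mst := {|
  Nsort := nat; zeroN := 0; oneN := 1; addN := Nat.add; mulN := Nat.mul;
  ltN := Nat.lt;
  Tsort := list (carrier Mst);
  len := @length (carrier Mst);
  ind := fun p i m => nth_error p i = Some m;
|}.

(** An embedding of tau_tup-structures B -> A over the same M-sort which is
    the identity on M (so the tau-symbols are trivially preserved):
    injective maps on the N- and M_tup-sorts preserving 0,1,+,* and
    |.|, and preserving and reflecting < and ind. *)
Definition tup_embedding (L : language) (Mst : Lstruct L) (B A : tupStruct Mst)
  (eN : Nsort B -> Nsort A) (eT : Tsort B -> Tsort A) : Prop :=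
  (forall x y, eN x = eN y -> x = y) /\
  (forall p q, eT p = eT q -> p = q) /\
  eN (zeroN B) = zeroN A /\ eN (oneN B) = oneN A /\
  (forall x y, eN (addN B x y) = addN A (eN x) (eN y)) /\
  (forall x y, eN (mulN B x y) = mulN A (eN x) (eN y)) /\
  (forall x y, ltN B x y <-> ltN A (eN x) (eN y)) /\
  (forall p, eN (len B p) = len A (eT p)) /\
  (forall p i m, ind B p i m <-> ind A (eT p) (eN i) m).

Definition tupstar_embedding (L : language) (Mst : Lstruct L)
  (B A : tupStarStruct Mst)
  (eN : Nsort B -> Nsort A) (eT : Tsort B -> Tsort A) : Prop :=
  @tup_embedding L Mst B A eN eT /\
  (forall x, Rrel B x <-> Rrel A (eN x)) /\
  (forall x p, gfun B x p = gfun A (eN x) (eT p)).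

Definition stdTupStar (L : language) (Mst : Lstruct L) (A : tupStarStruct Mst)
  (eN : nat -> Nsort A) (eT : list (carrier Mst) -> Tsort A)
  : tupStarStruct Mst := {|
  base := stdTup Mst;
  Rrel := fun n : nat => Rrel A (eN n);
  gfun := fun (n : nat) (p : list (carrier Mst)) => gfun A (eN n) (eT p);
|}.

(* Main.v *)
Require Import Defs.
From Stdlib Require Import List Arith Lia ClassicalEpsilon.
Import ListNotations.

Fixpoint numN (L : language) (Mst : Lstruct L) (A : tupStruct Mst) (n : nat) : Nsort A :=
  match n with 0 => zeroN A | S k => addN A (@numN L Mst A k) (oneN A) end.

Theorem lemma5p5 (L : language) (HL : countable_language L) (Mst : Lstruct L)
  (A : tupStarStruct Mst) (HA : T_tup A) :
  exists (eN : nat -> Nsort A) (eT : list (carrier Mst) -> Tsort A),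
    (* e is an embedding of M^{<N} into the tau_tup-reduct of A, identity on M *)
    @tup_embedding L Mst (stdTup Mst) A eN eT /\
    (* uniqueness *)
    (forall (eN' : nat -> Nsort A) (eT' : list (carrier Mst) -> Tsort A),
        @tup_embedding L Mst (stdTup Mst) A eN' eT' ->
        (forall n, eN' n = eN n) /\ (forall p, eT' p = eT p)) /\
    (* e is an embedding of (M^{<N}, R', g') into A *)
    @tupstar_embedding L Mst (stdTupStar A eN eT) A eN eT /\
    (* the N-sort of A is an end extension of N *)
    (forall (a : Nsort A) (n : nat), ltN A a (eN n) -> exists m, a = eN m) /\
    (* tuples of standard length are standard *)
    (forall p : Tsort A, (exists n, len A p = eN n) -> exists s, p = eT s).
Proof.
  destruct HA as [PA [Ha [Hb [Hc [Hd [He [Hf Hg]]]]]]].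
  destruct PA as [addA [addC [mulA [mulC [distr [add0mul0 [mul1 [ltT [ltI [ltTri
    [ltAdd [ltMul [ltSub [[lt01 disc] pos0]]]]]]]]]]]]]].
  set (e := @numN L Mst (base A)).
  assert (eS : forall n, e (S n) = addN A (e n) (oneN A)) by reflexivity.
  assert (e0 : e 0 = zeroN A) by reflexivity.
  assert (add0 : forall x, addN A x (zeroN A) = x) by (intro x; apply add0mul0).
  assert (mul0 : forall x, mulN A x (zeroN A) = zeroN A) by (intro x; apply add0mul0).
  assert (ltAddl : forall x y z, ltN A x y -> ltN A (addN A z x) (addN A z y)).
  { intros x y z H. rewrite (addC z x), (addC z y). now apply ltAdd. }
  assert (ltSucc : forall x, ltN A x (addN A x (oneN A))).
  { intro x. pose proof (ltAddl _ _ x lt01). now rewrite add0 in H. }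
  assert (emono : forall n m, n < m -> ltN A (e n) (e m)).
  { intros n m H. induction H. rewrite eS; apply ltSucc.
    rewrite eS. eapply ltT; [exact IHle | apply ltSucc]. }
  assert (ltRefl : forall n m, ltN A (e n) (e m) <-> n < m).
  { intros n m; split; [|apply emono]. intro H.
    destruct (Nat.lt_ge_cases n m) as [h|h]; auto. exfalso.
    destruct (Nat.eq_dec n m) as [->|hne]. now apply (ltI (e m)).
    assert (m < n) by lia. apply (ltI (e n)). eapply ltT; [exact H| now apply emono]. }
  assert (einj : forall n m, e n = e m -> n = m).
  { intros n m H. destruct (Nat.lt_trichotomy n m) as [h|[h|h]]; auto;
    apply emono in h; rewrite H in h; exfalso; eapply ltI; eauto. }
  assert (eadd : forall x y, e (x + y) = addN A (e x) (e y)).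
  { intros x y; induction x; simpl Nat.add.
    - rewrite e0, addC, add0; reflexivity.
    - rewrite !eS, IHx, !addA, (addC (e y) (oneN A)); reflexivity. }
  assert (emul : forall x y, e (x * y) = mulN A (e x) (e y)).
  { intros x y; induction x; simpl Nat.mul.
    - rewrite e0, mulC, mul0; reflexivity.
    - rewrite eadd, IHx, eS, (mulC (addN A (e x) (oneN A))), distr, mul1,
        (mulC (e y)), addC; reflexivity. }
  assert (e1 : e 1 = oneN A).
  { rewrite eS, e0, addC, add0; reflexivity. }
  assert (endext : forall a n, ltN A a (e n) -> exists m, a = e m).
  { intros a n; revert a; induction n; intros a H.
    - exfalso. rewrite e0 in H. destruct (pos0 a) as [h|h].
      + apply (ltI a); eapply ltT; eauto.
      + subst; eapply ltI; eauto.
    - rewrite eS in H. destruct (ltTri a (e n)) as [h|[h|h]].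
      + apply IHn; auto.
      + eauto.
      + exfalso. destruct (ltSub _ _ h) as [z Hz]. subst a.
        destruct (pos0 z) as [hz|hz].
        * destruct (disc z hz) as [h1|h1].
          -- apply (ltAddl _ _ (e n)) in h1. apply (ltI (addN A (e n) z)). eapply ltT; eauto.
          -- subst z. eapply ltI; eauto.
        * subst z. rewrite add0 in h. eapply ltI; eauto. }
  set (Spec := fun (s : list (carrier Mst)) (t : Tsort A) =>
     len A t = e (length s) /\ forall k m, ind A t (e k) m <-> nth_error s k = Some m).
  assert (exT : forall s, exists t, Spec s t).
  { induction s using rev_ind.
    - destruct He as [p Hp]. exists p. split; [exact Hp|].
      intros k m; split; intro H.
      + exfalso. apply Ha in H. rewrite Hp in H. rewrite <- e0 in H.
        apply ltRefl in H; lia.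
      + destruct k; discriminate.
    - destruct IHs as [t [Ht1 Ht2]]. destruct (Hf t x) as [r [Hr1 [Hr2 Hr3]]].
      exists r. split.
      + rewrite Hr1, Ht1, length_app, Nat.add_comm; reflexivity.
      + intros k m.
        destruct (Nat.lt_trichotomy k (length s)) as [h|[h|h]].
        * rewrite nth_error_app1 by lia. rewrite <- Ht2.
          rewrite Hr3; [tauto|]. rewrite Ht1. now apply emono.
        * subst k. rewrite nth_error_app2, Nat.sub_diag by lia. simpl.
          rewrite Ht1 in Hr2. split; intro H.
          -- f_equal; eapply Hb; eauto.
          -- injection H; intros <-; auto.
        * split; intro H.
          -- exfalso. apply Ha in H. rewrite Hr1, Ht1, <- eS in H.
             apply ltRefl in H; lia.
          -- exfalso. assert (nth_error (s ++ [x]) k = None) by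
               (apply nth_error_None; rewrite length_app; simpl; lia).
             congruence. }
  set (eT := fun s => proj1_sig (constructive_indefinite_description _ (exT s))).
  assert (eTspec : forall s, Spec s (eT s)).
  { intro s. unfold eT. destruct (constructive_indefinite_description _ (exT s)); auto. }
  assert (specU : forall s t, Spec s t -> t = eT s).
  { intros s t [H1 H2]. destruct (eTspec s) as [G1 G2]. apply Hd. congruence.
    intros i hi. rewrite H1 in hi. destruct (endext _ _ hi) as [k ->].
    apply ltRefl in hi. destruct (nth_error s k) as [m|] eqn:E.
    - exists m. rewrite H2, G2; auto.
    - apply nth_error_None in E; lia. }
  assert (emb : tup_embedding (stdTup Mst) A e eT).
  { split; [|split; [|split; [|split; [|split; [|split; [|split; [|split]]]]]]];
      simpl.
    - exact einj.
    - intros p q H. destruct (eTspec p) as [P1 P2]. destruct (eTspec q) as [Q1 Q2].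
      rewrite H in P1, P2. apply nth_error_ext. intro k.
      destruct (nth_error p k) as [m|] eqn:E.
      + symmetry. apply Q2, P2. exact E.
      + destruct (nth_error q k) as [m|] eqn:E2; auto.
        apply Q2, P2 in E2. congruence.
    - exact e0.
    - exact e1.
    - exact eadd.
    - exact emul.
    - intros x y; symmetry; apply ltRefl.
    - intro p; symmetry; apply (eTspec p).
    - intros p i m. symmetry; apply (eTspec p). }
  exists e, eT. split; [exact emb|]. split; [|split; [|split]].
  - intros eN' eT' [H1 [H2 [H3 [H4 [H5 [H6 [H7 [H8 H9]]]]]]]].
    assert (hn : forall n, eN' n = e n).
    { induction n. exact H3. replace (S n) with (n + 1) by lia.
      change (eN' (n + 1)) with (eN' (addN (stdTup Mst) n (oneN (stdTup Mst)))). rewrite H5, IHn, H4, eadd, e1; reflexivity. }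
    split; [exact hn|]. intro p. apply specU. split.
    + rewrite <- H8, hn; reflexivity.
    + intros k m. rewrite <- hn, <- H9. simpl; tauto.
  - split; [exact emb|]. simpl. split; intros; [tauto|reflexivity].
  - exact endext.
  - intros p [n Hn].
    assert (build : forall j, j <= n -> exists s : list (carrier Mst), length s = j /\
              forall k m, k < j -> (ind A p (e k) m <-> nth_error s k = Some m)).
    { induction j; intro hj.
      - exists []; split; [reflexivity|]; intros; lia.
      - destruct IHj as [s [Hs1 Hs2]]; [lia|].
        destruct (Hc p (e j)) as [m Hm]. rewrite Hn; apply emono; lia.
        exists (s ++ [m]). split. rewrite length_app, Hs1; simpl; lia.
        intros k m' hk. destruct (Nat.eq_dec k j) as [->|hne].
        + rewrite nth_error_app2, Hs1, Nat.sub_diag by lia. simpl.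
          split; intro H. f_equal; eapply Hb; eauto. injection H; intros <-; auto.
        + rewrite nth_error_app1 by lia. apply Hs2; lia. }
    destruct (build n (le_n n)) as [s [Hs1 Hs2]]. exists s. apply specU. split.
    + rewrite Hn, Hs1; reflexivity.
    + intros k m. destruct (Nat.lt_ge_cases k n) as [h|h]. apply Hs2; auto.
      split; intro H.
      * exfalso. apply Ha in H. rewrite Hn in H. apply ltRefl in H; lia.
      * exfalso. assert (nth_error s k = None) by (apply nth_error_None; lia). congruence.
Qed.
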